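(* If a propositional Hilbert-type calculus $\mathbf{C}$ is strictly analytic, then $\mathrm{MC}(\mathbf{C})=\mathrm{Thm}(\mathbf{C})$.
   Context: A propositional language has variables $X_1,X_2,\ldots$ and finitely many connectives with arities. The depth $\mathrm{dp}(A)$ of a formula is $0$ for variables and constants and $\max\{\mathrm{dp}(A_1),\ldots,\mathrm{dp}(A_n)\}+1$ for $A=\Box(A_1,\ldots,A_n)$. $\mathrm{Var}(A)$ is the set of variables in $A$. A substitution $\sigma$ maps variables to formulas; $F\sigma$ is the result of simultaneous replacement. A propositional Hilbert-type calculus $\mathbf{C}$ is given by a finite set of axioms and a finite set of rules (premises $A_1,\ldots,A_n$, conclusion $C$). A derivation is a finite sequence of formulas each of which is a substitution instance of an axiom or is $C\sigma$ for a rule and substitution $\sigma$ with all $A_j\sigma$ occurring earlier; $\mathrm{Thm}(\mathbf{C})$ is the set of derivable formulas. $\mathbf{C}$ is strictly analytic if for every rule with premises $A_1,\ldots,A_n$ and conclusion $C$, each $i$ satisfies $\mathrm{Var}(A_i)\subseteq\mathrm{Var}(C)$ and $\mathrm{dp}(A_i\sigma)\le\mathrm{dp}(C\sigma)$ for every substitution $\sigma$. A finite-valued logic $\mathbf{M}$ has a finite set of truth values, designated values, and a truth function per connective; valuations extend to formulas; a valuation satisfies $F$ if $F$ is designated; tautologies are formulas satisfied by all valuations. $\mathbf{M}$ is a cover for $\mathbf{C}$ if all axioms are tautologies of $\mathbf{M}$ and for every rule every valuation satisfying all premises satisfies the conclusion. $\mathrm{MC}(\mathbf{C})$ is the set of formulas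 that are tautologies of every finite-valued cover of $\mathbf{C}$. *)

(* Defs.v *)
From mathcomp Require Import all_boot.
From Stdlib Require List.

Set Implicit Arguments.
Unset Strict Implicit.
Unset Printing Implicit Defensive.

(* A propositional language: finitely many connectives, each with an arity.
   Constants are 0-ary connectives. *)
Record lang := Lang { conn : finType ; arity : conn -> nat }.

Section Syntax.
Variable L : lang.

(* Formulas: variables X_n (n : nat) and applications of connectives.
   Arguments are given as a list; well-formedness (correct arity) is the
   predicate [wf] below. *)
Inductive form : Type :=
| Var : nat -> form
| App : conn L -> seq form -> form.

Fixpoint wf (A : form) : Prop :=
  match A with
  | Var _ => True
  | App c args => size args = arity c /\ foldr and True (map wf args)
  end.

Fixpoint dp (A : form) : nat :=
  match A with
  | Var _ => 0
  | App c args =>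
      match args with
      | [::] => 0
      | _ => (foldr maxn 0 (map dp args)).+1
      end
  end.

Fixpoint occurs (x : nat) (A : form) : Prop :=
  match A with
  | Var y => x = y
  | App c args => foldr or False (map (occurs x) args)
  end.

Definition subst_t := nat -> form.
Definition wf_subst (s : subst_t) : Prop := forall x, wf (s x).

Fixpoint subst (s : subst_t) (A : form) : form :=
  match A with
  | Var x => s x
  | App c args => App c (map (subst s) args)
  end.

(* Hilbert-type calculus: finite lists of axioms and rules
   (a rule is (premises, conclusion)). *)
Record calculus := Calculus {
  axioms : seq form ;
  rules : seq (seq form * form) }.

Definition calc_wf (C : calculus) : Prop :=
  (forall A, List.In A (axioms C) -> wf A) /\
  (forall r, List.In r (rules C) ->
     (forall A, List.In A r.1 -> wf A) /\ wf r.2).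

Definition is_derivation (C : calculus) (d : seq form) : Prop :=
  forall i, i < size d ->
    let F := nth (Var 0) d i in
    (exists A s, List.In A (axioms C) /\ wf_subst s /\ F = subst s A) \/
    (exists r s, List.In r (rules C) /\ wf_subst s /\ F = subst s r.2 /\
       forall A, List.In A r.1 ->
         exists j, j < i /\ nth (Var 0) d j = subst s A).

Definition Thm (C : calculus) (F : form) : Prop :=
  exists d, is_derivation C d /\ exists i, i < size d /\ nth (Var 0) d i = F.

Definition strictly_analytic (C : calculus) : Prop :=
  forall r, List.In r (rules C) ->
    forall A, List.In A r.1 ->
      (forall x, occurs x A -> occurs x r.2) /\
      (forall s, wf_subst s -> dp (subst s A) <= dp (subst s r.2)).

Record fvlogic := FVLogic {
  tv : finType ;
  desig : pred tv ;
  op : forall c : conn L, (arity c).-tuple tv -> tv }.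

Section Semantics.
Variable M : fvlogic.

Fixpoint eval (v : nat -> tv M) (A : form) : tv M :=
  match A with
  | Var x => v x
  | App c args =>
      @op M c [tuple nth (v 0) (map (eval v) args) i | i < arity c]
  end.

Definition satisfies (v : nat -> tv M) (A : form) : Prop := desig (eval v A).

Definition tautology (A : form) : Prop := forall v, satisfies v A.

Definition cover (C : calculus) : Prop :=
  (forall A, List.In A (axioms C) -> tautology A) /\
  (forall r, List.In r (rules C) ->
     forall v, (forall A, List.In A r.1 -> satisfies v A) -> satisfies v r.2).
End Semantics.

Definition MC (C : calculus) (F : form) : Prop :=
  forall M : fvlogic, cover M C -> tautology M F.

End Syntax.

(* Main.v *)
From HB Require Import structures.
Require Import Defs.
From mathcomp Require Import all_boot.
From Stdlib Require Import ClassicalEpsilon.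
Set Implicit Arguments.
Unset Strict Implicit.
Unset Printing Implicit Defensive.

Lemma tup_val (T : Type) (k : nat) (d : T) (l : seq T) : size l = k ->
  val [tuple nth d l i | i < k] = l.
Proof.
move=> Hs. apply: (@eq_from_nth _ d) => [|i Hi]; first by rewrite size_tuple.
rewrite size_tuple in Hi.
by have := nth_mktuple (fun j : 'I_k => nth d l j) d (Ordinal Hi).
Qed.

Lemma foldr_andP (A : Type) (P : A -> Prop) l :
  foldr and True (map P l) <-> (forall a, List.In a l -> P a).
Proof.
elim: l => [|b l IH] /=; first by split.
split.
- by move=> [Hb /IH Hl] a [<-|Ha]; [|apply: Hl].
- move=> H; split; first by apply: H; left.
  by apply/IH => a Ha; apply: H; right.
Qed.

Lemma foldr_orP (A : Type) (P : A -> Prop) l :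
  foldr or False (map P l) <-> (exists a, List.In a l /\ P a).
Proof.
elim: l => [|b l IH] /=; first by split => // [[a []]].
split.
- by move=> [Hb|/IH [a [Ha Pa]]]; [exists b; split; [left|]|exists a; split; [right|]].
- move=> [a [[<-|Ha] Pa]]; first by left.
  by right; apply/IH; exists a.
Qed.

Lemma In_map (A B : Type) (f : A -> B) l b :
  List.In b (map f l) <-> exists a, f a = b /\ List.In a l.
Proof.
elim: l => [|x l IH] /=; first by split => // [[a []]].
split.
- case=> [H|H]; first by exists x; split; [|left].
  by case/IH: H => a [Ha Hin]; exists a; split; [|right].
- case=> a [Hab [Hx|Ha]]; first by left; rewrite Hx.
  by right; apply/IH; exists a.
Qed.

Lemma map_ext_In (A B : Type) (f g : A -> B) l :
  (forall a, List.In a l -> f a = g a) -> map f l = map g l.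
Proof.
elim: l => [|x l IH] //= H; rewrite H; last by left.
by rewrite IH // => a Ha; apply: H; right.
Qed.

Lemma inIn (T : eqType) (a : T) l : a \in l <-> List.In a l.
Proof.
elim: l => [|b l IH] //=; rewrite in_cons; split.
- by case/orP => [/eqP ->|/IH]; [left|right].
- by move=> [->|/IH ->]; rewrite ?eqxx ?orbT.
Qed.

Definition pb (P : Prop) : bool := if excluded_middle_informative P then true else false.
Lemma pbP (P : Prop) : pb P = true <-> P.
Proof. by rewrite /pb; case: excluded_middle_informative. Qed.

Section Main.
Variable L : lang.
Notation form := (form L).

Definition form_ind2 (P : form -> Prop) (HV : forall x, P (Var L x))
  (HA : forall c args, (forall a, List.In a args -> P a) -> P (App c args)) :
  forall G, P G :=
  fix F G := match G with
  | Var x => HV x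
  | App c args => HA c args
     ((fix G2 (l : seq form) : forall a, List.In a l -> P a :=
        match l with
        | [::] => fun a H => False_ind _ H
        | b :: l' => fun a H => match H with
                     | or_introl e => eq_ind b P (F b) a e
                     | or_intror H' => G2 l' a H' end
        end) args)
  end.

Fixpoint enc (G : form) : GenTree.tree (conn L + nat) :=
  match G with
  | Var x => GenTree.Leaf (inr x)
  | App c args => GenTree.Node 0 (GenTree.Leaf (inl c) :: map enc args)
  end.
Fixpoint dec (t : GenTree.tree (conn L + nat)) : form :=
  match t with
  | GenTree.Leaf (inr x) => Var L x
  | GenTree.Leaf (inl _) => Var L 0
  | GenTree.Node _ (GenTree.Leaf (inl c) :: ts) => App c (map dec ts)
  | GenTree.Node _ _ => Var L 0
  end.
Lemma encK : cancel enc dec.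
Proof.
elim/form_ind2 => [x|c args IH] //=.
by rewrite -map_comp (map_ext_In (g := id)) ?map_id.
Qed.
HB.instance Definition _ := Countable.copy form (can_type encK).
End Main.

Section Syn.
Variable L : lang.
Notation form := (form L).
Implicit Types (G A : form) (s : subst_t L).

Lemma dp_foldr a l : List.In a l -> dp a <= foldr maxn 0 (map (@dp L) l).
Proof.
elim: l => [|b l IH] //= [->|H]; first exact: leq_maxl.
exact: leq_trans (IH H) (leq_maxr _ _).
Qed.

Lemma dp_arg (c : conn L) (args : seq form) a : List.In a args -> dp a < dp (App c args).
Proof.
case: args => [|b l] // H; rewrite [dp (App c _)]/=; rewrite ltnS.
exact: (dp_foldr H).
Qed.

Lemma foldr_le l k : (forall a, List.In a l -> dp a <= k) -> foldr maxn 0 (map (@dp L) l) <= k.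
Proof.
elim: l => [|x l' IH] H //=; rewrite geq_max H /=; last by left.
by apply: IH => a Ha; apply: H; right.
Qed.

Lemma dp_le (c : conn L) (args : seq form) k : (forall a, List.In a args -> dp a <= k) -> dp (App c args) <= k.+1.
Proof.
case: args => [|b l] // H; rewrite [dp (App c _)]/= ltnS.
exact: (foldr_le H).
Qed.

Lemma wf_subst_lem s G : wf G -> (forall x, occurs x G -> wf (s x)) -> wf (subst s G).
Proof.
elim/form_ind2: G => [x|c args IH] //=; first by move=> _; apply; reflexivity.
move=> [Hs /foldr_andP Hw] Ho; split; first by rewrite size_map.
apply/foldr_andP => b /In_map [a [<- Ha]].
apply: (IH a Ha (Hw a Ha)) => x Hx; apply: Ho; apply/foldr_orP; by exists a.
Qed.

Lemma occurs_subst s G y : occurs y (subst s G) -> exists x, occurs x G /\ occurs y (s x).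
Proof.
elim/form_ind2: G => [x|c args IH] /=; first by exists x.
case/foldr_orP => b [/In_map [a [<- Ha]] Hy].
case: (IH a Ha Hy) => x [Hx Hyx]; exists x; split => //.
by apply/foldr_orP; exists a.
Qed.

Lemma subst_id G : subst (@Var L) G = G.
Proof.
elim/form_ind2: G => [x|c args IH] //=.
by rewrite (map_ext_In (g := id)) ?map_id.
Qed.

Lemma vars_fin G : exists V : seq nat, forall x, occurs x G -> x \in V.
Proof.
elim/form_ind2: G => [x|c args IH] /=; first by exists [:: x] => y ->; rewrite inE.
have : exists V : seq nat, forall a, List.In a args -> forall x, occurs x a -> x \in V.
  elim: args IH => [|b l IHl] IH; first by exists [::].
  case: (IH b (or_introl erefl)) => V1 H1.
  case: IHl => [a Ha|V2 H2]; first by apply: IH; right.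
  exists (V1 ++ V2) => a [<-|Ha] x Hx; rewrite mem_cat.
    by rewrite H1.
  by rewrite (H2 a Ha x Hx) orbT.
case=> V HV; exists V => x /foldr_orP [a [Ha Hx]]; exact: HV Hx.
Qed.

Lemma eval_subst (M : fvlogic L) (v : nat -> tv M) s A : wf A ->
  eval v (subst s A) = eval (fun x => eval v (s x)) A.
Proof.
elim/form_ind2: A => [x|c args IH] //= [Hs /foldr_andP Hw].
congr (op _); apply: val_inj.
rewrite !tup_val ?size_map // -map_comp.
apply: map_ext_In => a Ha /=. exact: (IH a Ha (Hw a Ha)).
Qed.

End Syn.

Section Deriv.
Variable L : lang.
Notation form := (form L).
Variable C : calculus L.

Lemma deriv_nil : is_derivation C [::].
Proof. by []. Qed.

Lemma deriv_cat d1 d2 : is_derivation C d1 -> is_derivation C d2 -> is_derivation C (d1 ++ d2).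
Proof.
move=> H1 H2 i; rewrite size_cat => Hi /=; rewrite nth_cat.
case: ifP => Hi1.
  case: (H1 i Hi1) => [Hax|[r [s [Hr [Hs [HF Hp]]]]]]; first by left.
  right; exists r, s; do 3 split => //.
  move=> A HA; case: (Hp A HA) => j [Hj Hn]; exists j; split => //.
  by rewrite nth_cat (ltn_trans Hj Hi1).
have Hi2 : i - size d1 < size d2 by rewrite ltn_subLR // leqNgt Hi1.
case: (H2 _ Hi2) => [Hax|[r [s [Hr [Hs [HF Hp]]]]]]; first by left.
right; exists r, s; do 3 split => //.
move=> A HA; case: (Hp A HA) => j [Hj Hn]; exists (size d1 + j); split.
  by rewrite -(ltn_add2l (size d1)) subnKC // leqNgt Hi1 in Hj.
by rewrite nth_cat ltnNge leq_addr /= addKn.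
Qed.

Lemma deriv_all (Fs : seq form) : (forall F, List.In F Fs -> Thm C F) ->
  exists d, is_derivation C d /\ forall F, List.In F Fs -> exists j, j < size d /\ nth (Var L 0) d j = F.
Proof.
elim: Fs => [|F Fs IH] H; first by exists [::].
case: (H F (or_introl erefl)) => d1 [Hd1 [i [Hi Hn]]].
case: IH => [G HG|d2 [Hd2 Hall]]; first by apply: H; right.
exists (d1 ++ d2); split; first exact: deriv_cat.
move=> G [<-|HG]; first by exists i; rewrite size_cat nth_cat Hi ltn_addr.
case: (Hall G HG) => j [Hj Hn2]; exists (size d1 + j).
by rewrite size_cat ltn_add2l nth_cat [_ < size d1]ltnNge leq_addr /= addKn.
Qed.

Lemma Thm_rule r s : List.In r (rules C) -> wf_subst s ->
  (forall A, List.In A r.1 -> Thm C (subst s A)) -> Thm C (subst s r.2).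
Proof.
move=> Hr Hs HA.
case: (@deriv_all (map (subst s) r.1)) => [F /In_map [A [<- HA']]|d [Hd Hall]].
  exact: HA.
exists (d ++ [:: subst s r.2]); split; last first.
  by exists (size d); rewrite size_cat addn1 ltnSn nth_cat ltnn subnn.
move=> i; rewrite size_cat addn1 ltnS leq_eqVlt => /orP [/eqP ->|Hi] /=.
  rewrite nth_cat ltnn subnn /=.
  right; exists r, s; do 3 split => //.
  move=> A HA'; case: (Hall (subst s A)) => [|j [Hj Hn]].
    by apply/In_map; exists A.
  by exists j; rewrite nth_cat Hj.
rewrite nth_cat Hi.
case: (Hd i Hi) => [Hax|[r' [s' [Hr' [Hs' [HF Hp]]]]]]; first by left.
right; exists r', s'; do 3 split => //.
move=> A HA'; case: (Hp A HA') => j [Hj Hn]; exists j; split => //.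
by rewrite nth_cat (ltn_trans Hj Hi).
Qed.

Lemma Thm_ax A s : List.In A (axioms C) -> wf_subst s -> Thm C (subst s A).
Proof.
move=> HA Hs; exists [:: subst s A]; split; last by exists 0.
by move=> [|i] //= _; left; exists A, s.
Qed.

Lemma sound_deriv (M : fvlogic L) d : calc_wf C -> Defs.cover M C -> is_derivation C d ->
  forall i, i < size d -> forall v : nat -> tv M, satisfies v (nth (Var L 0) d i).
Proof.
move=> [Wax Wr] [Cax Cr] Hd; elim/ltn_ind => i IH Hi v.
case: (Hd i Hi) => [[A [s [HA [Hs ->]]]]|[r [s [Hr [Hs [-> Hp]]]]]].
  by rewrite /satisfies eval_subst; [apply: Cax|apply: Wax].
rewrite /satisfies eval_subst; last by case: (Wr r Hr).
apply: Cr => // A HA; rewrite /satisfies -eval_subst; last by case: (Wr r Hr) => + _; apply.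
case: (Hp A HA) => j [Hj <-]; apply: IH => //; exact: ltn_trans Hj Hi.
Qed.

End Deriv.

Lemma subst_ext_occ (L : lang) (s s' : subst_t L) (G : form L) :
  (forall x, occurs x G -> s x = s' x) -> subst s G = subst s' G.
Proof.
elim/form_ind2: G => [x|c args IH] /= H; first by apply: H.
congr App; apply: map_ext_In => a Ha; apply: IH => // x Hx; apply: H.
by apply/foldr_orP; exists a.
Qed.

Section Compl.
Variable L : lang.
Notation form := (form L).
Variable C : calculus L.
Variable V : seq nat.
Variable n : nat.

Fixpoint lists (m : nat) (S : seq form) : seq (seq form) :=
  match m with
  | 0 => [:: [::]]
  | m'.+1 => List.flat_map (fun x => map (cons x) (lists m' S)) S
  end.

Lemma lists_in (l : seq form) m S : size l = m -> (forall a, List.In a l -> List.In a S) ->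
  List.In l (lists m S).
Proof.
elim: l m => [|a l IH] [|m] //= Hs H; first by left.
case: Hs => Hs; apply/List.in_flat_map; exists a; split; first by apply: H; left.
apply/In_map; exists l; split => //; apply: IH => // b Hb; apply: H; right; exact: Hb.
Qed.

Definition step (S : seq form) : seq form :=
  map (@Var L) V ++ List.flat_map (fun c => map (App c) (lists (arity c) S)) (enum (conn L)).

Fixpoint enumf k := match k with 0 => step [::] | k'.+1 => step (enumf k') end.

Definition good (G : form) := wf G /\ (forall x, occurs x G -> x \in V) /\ dp G <= n.

Lemma enum_compl k G : wf G -> (forall x, occurs x G -> x \in V) -> dp G <= k -> G \in enumf k.
Proof.
elim/form_ind2: G k => [x|c args IH] k.
  by move=> _ Ho _; case: k => [|k] /=; rewrite mem_cat map_f // Ho.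
move=> [Hs Hw] Ho Hd.
have Hl : List.In args (lists (arity c) (match k with 0 => [::] | k'.+1 => enumf k' end)).
  apply: lists_in => // a Ha; case: k Hd => [|k] Hd.
    by have := dp_arg c Ha; rewrite ltnNge (leq_trans Hd).
  apply/inIn; apply: IH => //; first by apply/foldr_andP: a Ha.
    by move=> x Hx; apply: Ho; apply/foldr_orP; exists a.
  by rewrite -ltnS (leq_trans (dp_arg c Ha) Hd).
have -> : enumf k = step (match k with 0 => [::] | k'.+1 => enumf k' end) by case: k {Hd Hl}.
rewrite /step mem_cat; apply/orP; right; apply/inIn.
apply/List.in_flat_map; exists c; split; first by apply/inIn; rewrite mem_enum.
by apply/In_map; exists args.
Qed.
End Compl.

Section Model.
Variable L : lang.
Notation form := (form L).
Variable C : calculus L.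
Variable V : seq nat.
Variable n : nat.

Definition E : seq form := [seq G <- enumf L V n | pb (good V n G)].

Lemma E_good G : G \in E -> good V n G.
Proof. by rewrite mem_filter => /andP [/pbP]. Qed.

Lemma E_compl G : good V n G -> G \in E.
Proof.
move=> Hg; rewrite mem_filter; apply/andP; split; first by apply/pbP.
by case: Hg => [Hw [Ho Hd]]; apply: enum_compl.
Qed.

Definition tvT : finType := option (seq_sub E).
Definition desigM (o : tvT) : bool := if o is Some y then pb (Thm C (val y)) else true.
Definition fval (o : tvT) : form := if o is Some y then val y else Var L 0.
Definition opM (c : conn L) (t : (arity c).-tuple tvT) : tvT :=
  if all (fun o : tvT => o) t then insub (App c (map fval t)) else None.

Definition Mdl : fvlogic L := @FVLogic L tvT desigM opM.

Definition sv (v : nat -> tvT) (x : nat) : form := fval (v x).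

Lemma sv_wf v : wf_subst (sv v).
Proof.
move=> x; rewrite /sv; case: (v x) => [y|] //=.
by case: (E_good (valP y)).
Qed.

Lemma eval_inv (v : nat -> tv Mdl) G y : wf G -> eval v G = Some y ->
  val y = subst (sv v) G /\ forall x, occurs x G -> isSome (v x).
Proof.
elim/form_ind2: G y => [x|c args IH] y /=.
  by move=> _ Hv; rewrite /sv Hv; split => // x' ->; rewrite Hv.
move=> [Hs /foldr_andP Hw].
rewrite /opM tup_val ?size_map //.
case: ifP => // /allP Hall Hins.
have Ha : forall a, List.In a args -> exists ya, eval v a = Some ya /\ val ya = subst (sv v) a
   /\ forall x, occurs x a -> isSome (v x).
  move=> a Ha; have := Hall (eval v a) (map_f _ (proj2 (inIn _ _) Ha)).
  case Hev: (eval v a) => [ya|] // _; exists ya; split => //.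
  exact: (IH a Ha ya (Hw a Ha) Hev).
split.
  move: Hins; case: insubP => [u _ Hu [<-]|//]; rewrite Hu.
  congr App; rewrite -map_comp; apply: map_ext_In => a /Ha [ya [Hev [Hy _]]] /=; rewrite Hev.
  exact: Hy.
move=> x /foldr_orP [a [HaIn Hx]]; case: (Ha a HaIn) => ya [_ [_ Ho]]; exact: Ho.
Qed.

Lemma eval_some (v : nat -> tv Mdl) G : wf G -> (forall x, occurs x G -> isSome (v x)) ->
  dp (subst (sv v) G) <= n -> exists y, eval v G = Some y /\ val y = subst (sv v) G.
Proof.
elim/form_ind2: G => [x|c args IH] /=.
  by move=> _ Ho _; rewrite /sv; case Hv: (v x) (Ho x erefl) => [y|] // _; exists y.
move=> [Hs /foldr_andP Hw] Ho Hd.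
have Ha : forall a, List.In a args -> exists ya, eval v a = Some ya /\ val ya = subst (sv v) a.
  move=> a Ha; apply: IH => //; first exact: Hw.
    by move=> x Hx; apply: Ho; apply/foldr_orP; exists a.
  apply: leq_trans Hd; apply: ltnW; apply: (dp_arg c (args := map (subst (sv v)) args)); apply/In_map; by exists a.
rewrite /opM tup_val ?size_map //.
have -> : all (fun o : tvT => o) (map (eval v) args).
  apply/allP => o /mapP [a /inIn /Ha [ya [-> _]] ->] //.
have -> : map fval (map (eval v) args) = map (subst (sv v)) args.
  by rewrite -map_comp; apply: map_ext_In => a /Ha [ya [Hev Hy]] /=; rewrite Hev.
case: insubP => [y _ Hy|/negP []]; first by exists y.
apply: E_compl; split; last split => //.
  apply: (wf_subst_lem (G := App c args)) => //; last by move=> x _; apply: sv_wf.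
  by split => //; apply/foldr_andP.
move=> y /(occurs_subst (G := App c args)) [x [Hx Hy]].
move: Hy (Ho x Hx); rewrite /sv; case: (v x) => [z|] /= // Hy _.
by case: (E_good (valP z)) => _ [Hz _]; apply: Hz.
Qed.
End Model.

Lemma Mcover (L : lang) (C : calculus L) V n :
  calc_wf C -> strictly_analytic C -> Defs.cover (Mdl C V n) C.
Proof.
move=> [Wax Wr] SA; split.
  move=> A HA v; rewrite /satisfies; case Hev: (eval v A) => [y|] //=.
  case: (eval_inv (Wax A HA) Hev) => Hy _; apply/pbP; rewrite Hy.
  by apply: Thm_ax => //; apply: sv_wf.
move=> r Hr v Hp; rewrite /satisfies; case Hev: (eval v r.2) => [y|] //=.
have [Wp Wc] := Wr r Hr.
case: (eval_inv Wc Hev) => Hy Hocc; apply/pbP; rewrite Hy.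
apply: Thm_rule => //; first exact: sv_wf.
move=> A HA; case: (SA r Hr A HA) => Hvar Hdp.
case: (@eval_some L C V n v A (Wp A HA)) => [x Hx||ya [Hea Hya]].
- by apply: Hocc; apply: Hvar.
- apply: leq_trans (Hdp _ (sv_wf v)) _; rewrite -Hy.
  by case: (E_good (valP y)) => _ [].
- by have := Hp A HA; rewrite /satisfies Hea /= => /pbP; rewrite Hya.
Qed.

Theorem corollary4 (L : lang) (C : calculus L) :
  calc_wf C -> strictly_analytic C ->
  forall F : form L, wf F -> (MC C F <-> Thm C F).
Proof.
move=> Hwf SA F HF; split.
  move=> HMC; case: (vars_fin F) => V HV.
  have Ht := HMC _ (@Mcover L C V (dp F) Hwf SA).
  pose v0 : nat -> tv (Mdl C V (dp F)) := fun x => insub (Var L x).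
  have Hin : forall x, occurs x F -> Var L x \in E L V (dp F).
    by move=> x Hx; apply: E_compl; split => //; split => // y ->; apply: HV.
  have Hsv : forall x, occurs x F -> sv v0 x = Var L x.
    move=> x Hx; rewrite /sv /v0; case: insubP => [u _ Hu|] //=.
    by rewrite Hin.
  have Hsome : forall x, occurs x F -> isSome (v0 x).
    move=> x Hx; rewrite /v0; case: insubP => [u _ _|] //.
    by rewrite Hin.
  have HsF : subst (sv v0) F = F.
    by rewrite -[RHS](subst_id F); apply: subst_ext_occ.
  case: (@eval_some L C V (dp F) v0 F HF Hsome) => [|y [Hev Hy]]; first by rewrite HsF.
  by have := Ht v0; rewrite /satisfies Hev /= => /pbP; rewrite Hy HsF.
move=> [d [Hd [i [Hi <-]]]] M Hcov v.
exact: (sound_deriv Hwf Hcov Hd Hi).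
Qed.
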